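(* Let $P$ be a set of $n\geq 5$ points in general position in the plane. Then $\operatorname{diam}(D(P))\in\{2,3,4\}$ if $n=5$, $\operatorname{diam}(D(P))\in\{2,3\}$ if $n\in\{6,7,8\}$, and $\operatorname{diam}(D(P))=2$ if $n\geq 9$.
   Context: A set of points in the plane is in general position if no three of its points are collinear. The disjointness graph of segments $D(P)$ of $P$ is the graph whose vertices are all $\binom{n}{2}$ closed straight-line segments with both endpoints in $P$, two such segments being adjacent if and only if they are disjoint. The diameter $\operatorname{diam}(G)$ of a connected graph $G$ is the largest distance (length of a shortest path) between two vertices of $G$. *)

(* Defs.v *)
From mathcomp Require Import all_boot all_order all_algebra.
From mathcomp Require Import reals.
Set Implicit Arguments. Unset Strict Implicit. Unset Printing Implicit Defensive.
Import Order.TTheory GRing.Theory Num.Theory.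
Local Open Scope ring_scope.

Section Disj.
Variables (R : realType) (n : nat) (p : 'I_n -> R * R).

Definition on_closed_segment (a b x : R * R) : Prop :=
  exists t : R, 0 <= t /\ t <= 1 /\
    x.1 = (1 - t) * a.1 + t * b.1 /\ x.2 = (1 - t) * a.2 + t * b.2.

Definition det3 (a b c : R * R) : R :=
  (b.1 - a.1) * (c.2 - a.2) - (b.2 - a.2) * (c.1 - a.1).

Definition general_position : Prop :=
  forall i j k : 'I_n, i != j -> j != k -> i != k -> det3 (p i) (p j) (p k) != 0.

(* Vertices of D(P): segments with both endpoints in P, encoded by the
   2-element set of endpoint indices. *)
Definition is_segment (S : {set 'I_n}) : Prop := #|S| = 2%N.

Definition on_seg (S : {set 'I_n}) (x : R * R) : Prop :=
  exists i j : 'I_n, S = [set i; j] /\ on_closed_segment (p i) (p j) x.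

(* Adjacency in D(P): two segments that are disjoint closed sets. *)
Definition disj_adj (S T : {set 'I_n}) : Prop :=
  is_segment S /\ is_segment T /\ ~ (exists x, on_seg S x /\ on_seg T x).

End Disj.

Inductive walk (T : Type) (A : T -> T -> Prop) : T -> T -> nat -> Prop :=
| walk_nil x : walk A x x 0
| walk_cons x y z k : A x y -> walk A y z k -> walk A x z k.+1.

Definition dist_le (T : Type) (A : T -> T -> Prop) (u v : T) (k : nat) : Prop :=
  exists2 m, (m <= k)%N & walk A u v m.

Definition is_diameter (T : Type) (V : T -> Prop) (A : T -> T -> Prop) (d : nat) : Prop :=
  (forall u v, V u -> V v -> dist_le A u v d) /\
  (exists u v, V u /\ V v /\ ~ dist_le A u v d.-1).

(* Main.v *)
Require Import Defs.
From mathcomp Require Import all_boot all_order all_algebra.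
From mathcomp Require Import reals.
From mathcomp Require Import ring lra.
From Stdlib Require Import Classical.
From mathcomp Require Import zify.
Set Implicit Arguments. Unset Strict Implicit. Unset Printing Implicit Defensive.
Import Order.TTheory GRing.Theory Num.Theory.

Definition sort3 (a b c : nat) : (nat * nat * nat) * bool :=
  if a < b then
    if b < c then ((a,b,c), false)
    else if a < c then ((a,c,b), true)
    else ((c,a,b), false)
  else
    if a < c then ((b,a,c), true)
    else if b < c then ((b,c,a), false)
    else ((c,b,a), true).

Definition triples (m : nat) : seq (nat * nat * nat) :=
  flatten [seq flatten [seq [seq (x,y,z) | x <- iota 0 y] | y <- iota 0 z] | z <- iota 0 m].
Definition c3 z := nth 0 [:: 0; 0; 0; 1; 4; 10] z.
Definition c2 y := nth 0 [:: 0; 0; 1; 3; 6; 10] y.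
Definition tidx (t : nat * nat * nat) := c3 t.2 + c2 t.1.2 + t.1.1.

Definition lit (m : nat) a b c : nat * bool :=
  let s := sort3 a b c in (tidx s.1, s.2).
Definition neglit (x : nat * bool) := (x.1, ~~ x.2).
Definition lval (l : seq bool) (x : nat * bool) := addb (nth false l x.1) x.2.
Definition chi m l a b c := lval l (lit m a b c).
Definition tval l (t : seq (nat * bool)) := foldr (fun x acc => addb (lval l x) acc) false t.
Definition sat l (c : seq (seq (nat * bool))) := has (tval l) c && has (fun t => ~~ tval l t) c.

Definition gp_clause m a b c d e :=
  [:: [:: lit m a b c; lit m a d e]; [:: neglit (lit m a b d); lit m a c e];
      [:: lit m a b e; lit m a c d]].
Definition q_clause m a b c d :=
  [:: [:: lit m b c d]; [:: neglit (lit m a c d)]; [:: lit m a b d]; [:: neglit (lit m a b c)]].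

Definition gp_clauses m :=
  flatten [seq flatten [seq flatten [seq flatten [seq
    [seq gp_clause m a b c d e | e <- iota 0 m & uniq [:: a; b; c; d; e] && (c < d < e)]
   | d <- iota 0 m] | c <- iota 0 m] | b <- iota 0 m] | a <- iota 0 m].
Definition q_clauses m :=
  flatten [seq flatten [seq flatten [seq
    [seq q_clause m a b c d | d <- iota 0 m & (a < b < c) && (c < d)]
   | c <- iota 0 m] | b <- iota 0 m] | a <- iota 0 m].
Definition clauses m := gp_clauses m ++ q_clauses m.

Definition cmax (c : seq (seq (nat * bool))) := foldr maxn 0 [seq foldr maxn 0 [seq x.1 | x <- t] | t <- c].
Definition bucket m k := [seq c <- clauses m | cmax c == k].

Definition buckets m := [seq bucket m k | k <- iota 0 (size (triples m))].
Fixpoint search (bk : seq (seq (seq (seq (nat * bool))))) (leaf : seq bool -> bool) (k : nat) (pre : seq bool) : bool :=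
  match k with
  | 0 => leaf pre
  | k'.+1 =>
    let l1 := rcons pre true in let l2 := rcons pre false in
    let B := nth [::] bk (size pre) in
    if (if all (sat l1) B then search bk leaf k' l1 else true)
    then (if all (sat l2) B then search bk leaf k' l2 else true) else false
  end.

Definition segs m := [seq x <- [seq (i, j) | i <- iota 0 m, j <- iota 0 m] | x.1 < x.2].
Definition cadj m l (S U : nat * nat) :=
  uniq [:: S.1; S.2; U.1; U.2] &&
  ((chi m l S.1 S.2 U.1 == chi m l S.1 S.2 U.2) || (chi m l U.1 U.2 S.1 == chi m l U.1 U.2 S.2)).
Fixpoint exb {X : Type} (f : X -> bool) (s : seq X) : bool :=
  if s is x :: s' then (if f x then true else exb f s') else false.
Fixpoint reach m l k (S T : nat * nat) : bool :=
  if S == T then true else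
  if k is k'.+1 then exb (fun U => if cadj m l S U then reach m l k' U T else false) (segs m) else false.
Definition q m j l (T : nat * nat) :=
  let sg := segs m in
  exb (fun U => exb (fun V => reach m l j U V) [seq V <- sg | cadj m l V T]) [seq U <- sg | cadj m l (0,1) U].
Definition leaf m j l := if q m j l (0,2) then q m j l (2,3) else false.

Lemma comp6 : search (buckets 6) (leaf 6 1) (size (triples 6)) [::] = true.
Proof. vm_cast_no_check (erefl true). Qed.

Lemma comp5 : search (buckets 5) (leaf 5 2) (size (triples 5)) [::] = true.
Proof. vm_cast_no_check (erefl true). Qed.

Lemma exbP (X : eqType) (f : X -> bool) s : exb f s -> exists2 x, x \in s & f x.
Proof.
elim: s => //= x s IH; case: ifP => [fx _|_ /IH [y ys fy]].
  by exists x; rewrite ?mem_head.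
by exists y; rewrite // inE ys orbT.
Qed.

Lemma foldr_max_ge (s : seq nat) y : y \in s -> y <= foldr maxn 0 s.
Proof.
elim: s => //= x s IH; rewrite inE => /orP[/eqP->|ys]; first exact: leq_maxl.
exact: leq_trans (IH ys) (leq_maxr _ _).
Qed.

Lemma sat_prefix l s c : cmax c < size l -> sat (l ++ s) c = sat l c.
Proof.
move=> H.
have E : {in c, tval (l ++ s) =1 tval l}.
  move=> t tc.
  have Ht : forall x, x \in t -> x.1 < size l.
    move=> x xt; apply: leq_ltn_trans H.
    apply: leq_trans (foldr_max_ge (map_f (fun x : nat * bool => x.1) xt)) _.
    apply: foldr_max_ge.
    exact: (map_f (fun t0 : seq (nat * bool) => foldr maxn 0 [seq x.1 | x <- t0]) tc).
  elim: t {tc} Ht => //= x t IH Ht.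
  rewrite IH; last by move=> y yt; apply: Ht; rewrite inE yt orbT.
  by rewrite /lval nth_cat Ht ?mem_head.
rewrite /sat (eq_in_has E); congr (_ && _); apply: eq_in_has => t tc /=.
by rewrite E.
Qed.

Lemma bucketP m i c : c \in nth [::] (buckets m) i -> c \in clauses m /\ cmax c = i.
Proof.
rewrite /buckets; case: (ltnP i (size (triples m))) => hi.
  rewrite (nth_map 0) ?size_iota // nth_iota // add0n /bucket mem_filter.
  by case/andP => /eqP -> ->.
by rewrite nth_default ?size_map ?size_iota.
Qed.

Lemma search_ok m leaf k : forall pre s, size s = k ->
  search (buckets m) leaf k pre -> all (sat (pre ++ s)) (clauses m) -> leaf (pre ++ s).
Proof.
elim: k => [|k IH] pre [|b s] //=.
  by move=> _; rewrite cats0.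
move=> [Hs] Hsearch Hall.
have HB : all (sat (rcons pre b)) (nth [::] (buckets m) (size pre)).
  apply/allP => c cB; have [cC cm] := bucketP cB.
  rewrite -(@sat_prefix _ s c) ?size_rcons ?cm // cat_rcons.
  exact: (allP Hall).
rewrite -cat_rcons; apply: IH => //; last by rewrite cat_rcons.
clear Hall; case: b HB Hsearch => HB; rewrite HB.
  by case: (search _ _ _ (rcons pre true)).
by case: ifP.
Qed.

Lemma comp_ok m j : (m = 5 /\ j = 2) \/ (m = 6 /\ j = 1) ->
  forall l, size l = size (triples m) -> all (sat l) (clauses m) -> leaf m j l.
Proof.
move=> Hm l Hl Hall.
have Hs : search (buckets m) (leaf m j) (size (triples m)) [::].
  by case: Hm => -[-> ->]; [exact: comp5 | exact: comp6].
exact: (search_ok Hl Hs Hall).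
Qed.


Lemma tidx_ok m x y z : (m == 5) || (m == 6) -> x < y -> y < z -> z < m ->
  tidx (x, y, z) < size (triples m) /\ nth (0, 0, 0) (triples m) (tidx (x, y, z)) = (x, y, z).
Proof.
move=> Hm xy yz zm.
have H : all (fun z => all (fun y => all (fun x => (x < y < z) ==>
   ((tidx (x, y, z) < size (triples m)) &&
    (nth (0, 0, 0) (triples m) (tidx (x, y, z)) == (x, y, z)))) (iota 0 6)) (iota 0 6)) (iota 0 m).
  by case/orP: Hm => /eqP ->; vm_compute.
have m6 : m <= 6 by case/orP: Hm => /eqP ->.
have Hz : z \in iota 0 m by rewrite mem_iota; lia.
have Hy : y \in iota 0 6 by rewrite mem_iota; lia.
have Hx : x \in iota 0 6 by rewrite mem_iota; lia.
move/allP: H => /(_ z Hz) /allP /(_ y Hy) /allP /(_ x Hx).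
by rewrite xy yz /= => /andP[-> /eqP ->].
Qed.

Lemma sort3P (g : nat -> nat -> nat -> bool) a b c :
  (forall i j k, i \in [:: a; b; c] -> j \in [:: a; b; c] -> k \in [:: a; b; c] ->
     uniq [:: i; j; k] -> g i j k = g j k i) ->
  (forall i j k, i \in [:: a; b; c] -> j \in [:: a; b; c] -> k \in [:: a; b; c] ->
     uniq [:: i; j; k] -> g i j k = ~~ g j i k) ->
  uniq [:: a; b; c] ->
  let t := sort3 a b c in
  [/\ t.1.1.1 < t.1.1.2, t.1.1.2 < t.1.2, t.1.2 \in [:: a; b; c]
    & g a b c = addb (g t.1.1.1 t.1.1.2 t.1.2) t.2].
Proof.
move=> Hc Hs U.
have [ab ac bc] : [/\ a != b, a != c & b != c].
  by move: U; rewrite /= !inE !negb_or => /andP[/andP[-> ->] /andP[-> _]].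
have ma : a \in [:: a; b; c] by rewrite !inE eqxx.
have mb : b \in [:: a; b; c] by rewrite !inE eqxx ?orbT.
have mc : c \in [:: a; b; c] by rewrite !inE eqxx ?orbT.
have u : forall i j k : nat, i != j -> i != k -> j != k -> uniq [:: i; j; k].
  by move=> i j k ij ik jk; rewrite /= !inE !negb_or ij ik jk.
have ba : b != a by rewrite eq_sym. have ca : c != a by rewrite eq_sym.
have cb : c != b by rewrite eq_sym.
have e1 : g b c a = g a b c by rewrite (Hc a b c) // u.
have e2 : g c a b = g a b c by rewrite -e1 (Hc b c a) // u.
have e3 : g b a c = ~~ g a b c by rewrite (Hs a b c) ?negbK // u.
have e4 : g a c b = ~~ g a b c by rewrite (Hs a c b) ?e2 // u.
have e5 : g c b a = ~~ g a b c by rewrite (Hs c b a) ?e1 // u.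
rewrite /sort3.
case: ifP => h1; case: ifP => h2 /=.
- by rewrite h1 h2 mc addbF.
- case: ifP => h3 /=; first by rewrite h3 mb e4 addbT negbK; split => //; lia.
  by rewrite mb e2 addbF; split => //; lia.
- by rewrite mc e3 addbT negbK; split => //; lia.
- case: ifP => h3 /=.
    by rewrite h3 ma e1 addbF; split => //; lia.
  by rewrite ma e5 addbT negbK; split => //; lia.
Qed.

Lemma gp_memP m cl : cl \in gp_clauses m -> exists a b c d e,
  [/\ a < m, b < m, c < m, d < m & e < m] /\ uniq [:: a; b; c; d; e] /\
  cl = gp_clause m a b c d e.
Proof.
case/flatten_mapP => a; rewrite mem_iota => /andP[_ am].
case/flatten_mapP => b; rewrite mem_iota => /andP[_ bm].
case/flatten_mapP => c; rewrite mem_iota => /andP[_ cm].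
case/flatten_mapP => d; rewrite mem_iota => /andP[_ dm].
case/mapP => e; rewrite mem_filter mem_iota => /andP[/andP[U _] /andP[_ em]] ->.
by exists a, b, c, d, e.
Qed.

Lemma q_memP m cl : cl \in q_clauses m -> exists a b c d,
  [/\ a < m, b < m, c < m & d < m] /\ [&& a < b, b < c & c < d] /\
  cl = q_clause m a b c d.
Proof.
case/flatten_mapP => a; rewrite mem_iota => /andP[_ am].
case/flatten_mapP => b; rewrite mem_iota => /andP[_ bm].
case/flatten_mapP => c; rewrite mem_iota => /andP[_ cm].
case/mapP => d; rewrite mem_filter mem_iota => /andP[/andP[/andP[ab bc] cd] /andP[_ dm]] ->.
by exists a, b, c, d; rewrite ab bc cd.
Qed.

Lemma segs_mem m U : U \in segs m -> U.1 < U.2 /\ U.2 < m.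
Proof.
rewrite mem_filter => /andP[lt]; case/allpairsP => [[x y] [/= xm ym E]]; subst U.
by rewrite mem_iota in ym; split => //=; lia.
Qed.


Section RealPart.
Local Open Scope ring_scope.

Definition bitp (R : realType) n (p : 'I_n -> R * R) (i j k : 'I_n) : bool :=
  det3 (p i) (p j) (p k) < 0.

Lemma det3_cyc (R : realType) (a b c : R * R) : det3 a b c = det3 b c a.
Proof. rewrite /det3; ring. Qed.
Lemma det3_sw (R : realType) (a b c : R * R) : det3 b a c = - det3 a b c.
Proof. rewrite /det3; ring. Qed.
Lemma det3_aba (R : realType) (a b : R * R) : det3 a b a = 0.
Proof. rewrite /det3; ring. Qed.
Lemma det3_abb (R : realType) (a b : R * R) : det3 a b b = 0.
Proof. rewrite /det3; ring. Qed.
Lemma det3_comb (R : realType) (u v a b x : R * R) (t : R) :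
  x.1 = (1 - t) * a.1 + t * b.1 -> x.2 = (1 - t) * a.2 + t * b.2 ->
  det3 u v x = (1 - t) * det3 u v a + t * det3 u v b.
Proof. move=> e1 e2; rewrite /det3 e1 e2; ring. Qed.
Lemma gp_id (R : realType) (a b c d e : R * R) :
  det3 a b c * det3 a d e - det3 a b d * det3 a c e + det3 a b e * det3 a c d = 0.
Proof. rewrite /det3; ring. Qed.
Lemma q_id (R : realType) (a b c d : R * R) :
  det3 b c d - det3 a c d + det3 a b d - det3 a b c = 0.
Proof. rewrite /det3; ring. Qed.

Lemma set2_eq (T : finType) (i j i' j' : T) :
  [set i'; j'] = [set i; j] -> (i' = i /\ j' = j) \/ (i' = j /\ j' = i).
Proof.
move=> E.
have h1 : i' \in [set i; j] by rewrite -E !inE eqxx.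
have h2 : j' \in [set i; j] by rewrite -E !inE eqxx orbT.
have h3 : i \in [set i'; j'] by rewrite E !inE eqxx.
have h4 : j \in [set i'; j'] by rewrite E !inE eqxx orbT.
move: h1 h2 h3 h4; rewrite !inE.
by do 4 case/orP=> /eqP ?; subst; auto.
Qed.

Lemma on_seg_comb (R : realType) n (p : 'I_n -> R * R) (i j : 'I_n) x (u v : R * R) :
  on_seg p [set i; j] x -> exists t : R,
    [/\ 0 <= t, t <= 1 & det3 u v x = (1 - t) * det3 u v (p i) + t * det3 u v (p j)].
Proof.
case=> i' [j' [E [t [t0 [t1 [e1 e2]]]]]].
have := det3_comb u v e1 e2.
case: (set2_eq E) => [[-> ->]|[-> ->]] => H.
  by exists t; split.
exists (1 - t); split; [lra|lra|rewrite H; ring].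
Qed.

Lemma gp_ne0 (R : realType) n (p : 'I_n -> R * R) (i j k : 'I_n) :
  general_position p -> uniq [:: i; j; k] -> det3 (p i) (p j) (p k) != 0.
Proof.
move=> gp; rewrite /= !inE !negb_or => /andP[/andP[ij ik] /andP[jk _]].
exact: gp.
Qed.

Lemma disj_adj_sym (R : realType) n (p : 'I_n -> R * R) S T :
  disj_adj p S T -> disj_adj p T S.
Proof.
case=> hS [hT H]; split => //; split => // -[x [h1 h2]]; apply: H; exists x; exact: (conj h2 h1).
Qed.

Lemma uniq_sub4 (T : eqType) (i j k l : T) : uniq [:: i; j; k; l] ->
  [/\ uniq [:: i; j; k], uniq [:: i; j; l], uniq [:: k; l; i], uniq [:: k; l; j]
    & (i != j) && (k != l)].
Proof.
rewrite /= !inE !negb_or => /andP[/andP[ij /andP[ik il]] /andP[/andP[jk jl] /andP[kl _]]].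
by rewrite ij ik il jk jl kl !(eq_sym k) !(eq_sym l) ik il jk jl.
Qed.

Lemma Adj (R : realType) n (p : 'I_n -> R * R) (i j k l : 'I_n) :
  general_position p -> uniq [:: i; j; k; l] -> bitp p i j k = bitp p i j l ->
  disj_adj p [set i; j] [set k; l].
Proof.
move=> gp U Hb.
have [u1 u2 _ _ /andP[ij kl]] := uniq_sub4 U.
have A0 := gp_ne0 gp u1; have B0 := gp_ne0 gp u2.
split; first by rewrite /is_segment cards2 ij.
split; first by rewrite /is_segment cards2 kl.
move=> [x [H1 H2]].
have [t [t0 t1 e]] := on_seg_comb (p i) (p j) H1.
rewrite det3_aba det3_abb !mulr0 addr0 in e.
have [s [s0 s1 e']] := on_seg_comb (p i) (p j) H2.
move: Hb e'; rewrite /bitp e.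
move: A0 B0; set A := det3 _ _ (p k); set B := det3 _ _ (p l) => A0 B0.
rewrite neq_lt in A0; rewrite neq_lt in B0.
case/orP: A0 => hA; case/orP: B0 => hB;
  rewrite ?hA ?hB ?(lt_gtF hA) ?(lt_gtF hB) // => _ E; nra.
Qed.
End RealPart.


Section Bridge.
Local Open Scope ring_scope.

Definition l_real (R : realType) n (p : 'I_n -> R * R) (m : nat) (f : nat -> 'I_n) :=
  [seq bitp p (f t.1.1) (f t.1.2) (f t.2) | t <- triples m].

Lemma nonpos_neq0 (R : realType) (x : R) : x != 0 -> ~~ (0 < x) = (x < 0).
Proof. by move=> x0; rewrite -leNgt le_eqVlt (negbTE x0). Qed.

Lemma chi_real (R : realType) n (p : 'I_n -> R * R) m (f : nat -> 'I_n) a b c :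
  (m == 5)%N || (m == 6)%N -> general_position p ->
  (forall x y, (x < m)%N -> (y < m)%N -> f x = f y -> x = y) ->
  (a < m)%N -> (b < m)%N -> (c < m)%N -> uniq [:: a; b; c] ->
  chi m (l_real p m f) a b c = bitp p (f a) (f b) (f c).
Proof.
move=> Hm gp finj am bm cm U.
set g := fun i j k => bitp p (f i) (f j) (f k).
have mem_m : forall i, i \in [:: a; b; c] -> (i < m)%N.
  by move=> i; rewrite !inE => /orP[/eqP->|/orP[/eqP->|/eqP->]].
have Hc : forall i j k, i \in [:: a; b; c] -> j \in [:: a; b; c] -> k \in [:: a; b; c] ->
     uniq [:: i; j; k] -> g i j k = g j k i.
  by move=> i j k _ _ _ _; rewrite /g /bitp det3_cyc.
have Hs : forall i j k, i \in [:: a; b; c] -> j \in [:: a; b; c] -> k \in [:: a; b; c] ->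
     uniq [:: i; j; k] -> g i j k = ~~ g j i k.
  move=> i j k im jm km u.
  have u' : uniq [:: f i; f j; f k].
    rewrite (map_inj_in_uniq (s := [:: i; j; k])) //.
    move=> x y; rewrite !inE => hx hy; apply: finj.
    - by move: hx => /orP[/eqP->|/orP[/eqP->|/eqP->]]; apply: mem_m.
    - by move: hy => /orP[/eqP->|/orP[/eqP->|/eqP->]]; apply: mem_m.
  have D0 := gp_ne0 gp u'.
  rewrite /g /bitp det3_sw oppr_lt0 -nonpos_neq0 ?negbK //.
  by rewrite det3_sw oppr_eq0.
have := sort3P Hc Hs U.
rewrite /chi /lval /lit; case: (sort3 a b c) => [[[x y] z] s] /= [xy yz zin e].
rewrite (_ : bitp p (f a) (f b) (f c) = g a b c) // e /g.
have zm : (z < m)%N by apply: mem_m.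
have [ti tn] := tidx_ok Hm xy yz zm.
by rewrite (nth_map (0, 0, 0)%N) // tn.
Qed.

Lemma sign3 (R : realType) (x y z : R) : x + y + z = 0 -> x != 0 -> y != 0 -> z != 0 ->
  [|| x < 0, y < 0 | z < 0] && [|| ~~ (x < 0), ~~ (y < 0) | ~~ (z < 0)].
Proof.
move=> e x0 y0 z0.
have [hx|hx] := ltP x 0; have [hy|hy] := ltP y 0; have [hz|hz] := ltP z 0 => //=;
  first [lra | (have : 0 < x by rewrite lt_neqAle eq_sym x0 hx); lra].
Qed.

Lemma sign4 (R : realType) (x y z w : R) : x + y + z + w = 0 -> x != 0 -> y != 0 -> z != 0 ->
  w != 0 ->
  [|| x < 0, y < 0, z < 0 | w < 0] &&
  [|| ~~ (x < 0), ~~ (y < 0), ~~ (z < 0) | ~~ (w < 0)].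
Proof.
move=> e x0 y0 z0 w0.
have [hx|hx] := ltP x 0; have [hy|hy] := ltP y 0; have [hz|hz] := ltP z 0;
  have [hw|hw] := ltP w 0 => //=;
  first [lra | (have : 0 < x by rewrite lt_neqAle eq_sym x0 hx); lra].
Qed.

Lemma lval_neg l x : lval l (neglit x) = ~~ lval l x.
Proof. by rewrite /lval /neglit /= addbN. Qed.

Lemma bit_mul (R : realType) (x y : R) : x != 0 -> y != 0 -> addb (x < 0) (y < 0) = (x * y < 0).
Proof. by move=> x0 y0; rewrite mulr_lt0 x0 y0. Qed.

Lemma bit_opp (R : realType) (x : R) : x != 0 -> (- x < 0) = ~~ (x < 0).
Proof. by move=> x0; rewrite oppr_lt0 -(nonpos_neq0 x0) negbK. Qed.

Lemma sat_real (R : realType) n (p : 'I_n -> R * R) m (f : nat -> 'I_n) :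
  (m == 5)%N || (m == 6)%N -> general_position p ->
  (forall x y, (x < m)%N -> (y < m)%N -> f x = f y -> x = y) ->
  all (sat (l_real p m f)) (clauses m).
Proof.
move=> Hm gp finj.
have hl : forall i j k, (i < m)%N -> (j < m)%N -> (k < m)%N -> uniq [:: i; j; k] ->
    lval (l_real p m f) (lit m i j k) = bitp p (f i) (f j) (f k).
  by move=> i j k im jm km u; exact: chi_real.
have fnz : forall i j k, (i < m)%N -> (j < m)%N -> (k < m)%N -> uniq [:: i; j; k] ->
    det3 (p (f i)) (p (f j)) (p (f k)) != 0.
  move=> i j k im jm km u; apply: gp_ne0 gp _.
  rewrite (map_inj_in_uniq (s := [:: i; j; k])) //.
  move=> x y; rewrite !inE => hx hy; apply: finj.
  - by move: hx => /orP[/eqP->|/orP[/eqP->|/eqP->]].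
  - by move: hy => /orP[/eqP->|/orP[/eqP->|/eqP->]].
apply/allP => cl; rewrite mem_cat => /orP[/gp_memP|/q_memP].
- move=> [a [b [c [d [e [[am bm cm dm em] [U ->]]]]]]].
  have u1 : uniq [:: a; b; c] by move: U; rewrite /= !inE; lia.
  have u2 : uniq [:: a; d; e] by move: U; rewrite /= !inE; lia.
  have u3 : uniq [:: a; b; d] by move: U; rewrite /= !inE; lia.
  have u4 : uniq [:: a; c; e] by move: U; rewrite /= !inE; lia.
  have u5 : uniq [:: a; b; e] by move: U; rewrite /= !inE; lia.
  have u6 : uniq [:: a; c; d] by move: U; rewrite /= !inE; lia.
  rewrite /sat /gp_clause /= !lval_neg !addbF !hl // /bitp !addNb.
  rewrite !bit_mul ?fnz //.
  have E := gp_id (p (f a)) (p (f b)) (p (f c)) (p (f d)) (p (f e)).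
  move: E (fnz _ _ _ am bm cm u1) (fnz _ _ _ am dm em u2) (fnz _ _ _ am bm dm u3)
    (fnz _ _ _ am cm em u4) (fnz _ _ _ am bm em u5) (fnz _ _ _ am cm dm u6).
  set D1 := det3 _ _ (p (f c)); set D2 := det3 _ (p (f d)) (p (f e)).
  set D3 := det3 _ (p (f b)) (p (f d)); set D4 := det3 _ (p (f c)) (p (f e)).
  set D5 := det3 _ (p (f b)) (p (f e)); set D6 := det3 _ (p (f c)) (p (f d)).
  move=> E n1 n2 n3 n4 n5 n6.
  have H := @sign3 R (D1 * D2) (- (D3 * D4)) (D5 * D6).
  rewrite bit_opp ?mulf_neq0 // in H.
  rewrite !orbF; apply: H; rewrite ?oppr_eq0 ?mulf_neq0 //.
- move=> [a [b [c [d [[am bm cm dm] [O ->]]]]]].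
  have U : uniq [:: a; b; c; d] by move: O; rewrite /= !inE; lia.
  have u1 : uniq [:: b; c; d] by move: U; rewrite /= !inE; lia.
  have u2 : uniq [:: a; c; d] by move: U; rewrite /= !inE; lia.
  have u3 : uniq [:: a; b; d] by move: U; rewrite /= !inE; lia.
  have u4 : uniq [:: a; b; c] by move: U; rewrite /= !inE; lia.
  rewrite /sat /q_clause /= !lval_neg !addbF !hl // /bitp.
  have E := q_id (p (f a)) (p (f b)) (p (f c)) (p (f d)).
  move: E (fnz _ _ _ bm cm dm u1) (fnz _ _ _ am cm dm u2) (fnz _ _ _ am bm dm u3)
    (fnz _ _ _ am bm cm u4).
  set D1 := det3 (p (f b)) _ _; set D2 := det3 (p (f a)) (p (f c)) _.
  set D3 := det3 (p (f a)) (p (f b)) (p (f d)); set D4 := det3 (p (f a)) (p (f b)) (p (f c)).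
  move=> E n1 n2 n3 n4.
  have H := @sign4 R D1 (- D2) D3 (- D4).
  rewrite !bit_opp // in H.
  rewrite !orbF; apply: H; rewrite ?oppr_eq0 //.
  all: (rewrite -E; ring).
Qed.
End Bridge.


Lemma walk_snoc (T : Type) (A : T -> T -> Prop) x y z k :
  walk A x y k -> A y z -> walk A x z k.+1.
Proof.
elim=> [u|u v w k' Auv _ IH] Ayz.
  by apply: walk_cons Ayz (walk_nil _ _).
exact: walk_cons Auv (IH Ayz).
Qed.

Definition img n (f : nat -> 'I_n) (S : nat * nat) : {set 'I_n} := [set f S.1; f S.2].

Lemma inj_uniq n (f : nat -> 'I_n) m (s : seq nat) :
  (forall x y, x < m -> y < m -> f x = f y -> x = y) -> all (fun x => x < m) s ->
  uniq s -> uniq (map f s).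
Proof.
move=> finj /allP hs u; rewrite map_inj_in_uniq // => x y hx hy.
by apply: finj; apply: hs.
Qed.

Lemma cadj_real (R : realType) n (p : 'I_n -> R * R) m (f : nat -> 'I_n) (S U : nat * nat) :
  (m == 5) || (m == 6) -> general_position p ->
  (forall x y, x < m -> y < m -> f x = f y -> x = y) ->
  S.1 < m -> S.2 < m -> U.1 < m -> U.2 < m ->
  cadj m (l_real p m f) S U -> disj_adj p (img f S) (img f U).
Proof.
move=> Hm gp finj s1 s2 u1 u2 /andP[Un H].
have Uf : uniq [:: f S.1; f S.2; f U.1; f U.2].
  by apply: (inj_uniq (s := [:: S.1; S.2; U.1; U.2]) finj) => //=; rewrite s1 s2 u1 u2.
have Uf' : uniq [:: f U.1; f U.2; f S.1; f S.2].
  by apply: (inj_uniq (s := [:: U.1; U.2; S.1; S.2]) finj) => //=; [rewrite s1 s2 u1 u2 | move: Un; rewrite /= !inE; lia].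
have ch : forall a b c, a < m -> b < m -> c < m -> uniq [:: a; b; c] ->
    chi m (l_real p m f) a b c = bitp p (f a) (f b) (f c).
  by move=> a b c am bm cm u; apply: chi_real.
have t1 : uniq [:: S.1; S.2; U.1] by move: Un; rewrite /= !inE; lia.
have t2 : uniq [:: S.1; S.2; U.2] by move: Un; rewrite /= !inE; lia.
have t3 : uniq [:: U.1; U.2; S.1] by move: Un; rewrite /= !inE; lia.
have t4 : uniq [:: U.1; U.2; S.2] by move: Un; rewrite /= !inE; lia.
case/orP: H => /eqP H.
  by apply: Adj => //; rewrite -(ch _ _ _ s1 s2 u1 t1) -(ch _ _ _ s1 s2 u2 t2).
apply: disj_adj_sym; apply: Adj => //.
by rewrite -(ch _ _ _ u1 u2 s1 t3) -(ch _ _ _ u1 u2 s2 t4).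
Qed.

Lemma reach_real (R : realType) n (p : 'I_n -> R * R) m (f : nat -> 'I_n) k :
  (m == 5) || (m == 6) -> general_position p ->
  (forall x y, x < m -> y < m -> f x = f y -> x = y) ->
  forall S T, S.1 < m -> S.2 < m ->
  reach m (l_real p m f) k S T -> dist_le (disj_adj p) (img f S) (img f T) k.
Proof.
move=> Hm gp finj; elim: k => [|k IH] S T s1 s2 /=.
  by case: eqP => // ->; exists 0 => //; apply: walk_nil.
case: eqP => [-> _|_]; first by exists 0 => //; apply: walk_nil.
case/exbP => U Useg; case: ifP => // Hc Hr.
have [U12 U2] := segs_mem Useg.
have [k' k'k W] := IH U T (ltn_trans U12 U2) U2 Hr.
exists k'.+1 => //; apply: walk_cons W.
exact: (cadj_real Hm gp finj s1 s2 (ltn_trans U12 U2) U2 Hc).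
Qed.

Lemma leaf_real (R : realType) n (p : 'I_n -> R * R) m j (f : nat -> 'I_n) T :
  (m == 5) || (m == 6) -> general_position p ->
  (forall x y, x < m -> y < m -> f x = f y -> x = y) ->
  T.1 < m -> T.2 < m ->
  q m j (l_real p m f) T -> dist_le (disj_adj p) (img f (0, 1)) (img f T) j.+2.
Proof.
move=> Hm gp finj t1 t2.
have m2 : 1 < m by case/orP: Hm => /eqP ->.
case/exbP => U; rewrite mem_filter => /andP[HU Useg].
case/exbP => V; rewrite mem_filter => /andP[HV Vseg] Hr.
have [U12 U2] := segs_mem Useg; have [V12 V2] := segs_mem Vseg.
have [k kj W] := reach_real Hm gp finj (ltn_trans U12 U2) U2 Hr.
exists k.+2; first by [].
apply: (walk_cons (y := img f U)).
  exact: (cadj_real (S := (0, 1)) Hm gp finj (ltnW m2) m2 (ltn_trans U12 U2) U2 HU).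
apply: (walk_snoc W).
exact: (cadj_real (U := T) Hm gp finj (ltn_trans V12 V2) V2 t1 t2 HV).
Qed.


Lemma ext_list n (s : seq 'I_n) :
  uniq s -> uniq (s ++ enum (~: [set x in s])) /\ n <= size (s ++ enum (~: [set x in s])).
Proof.
move=> us; split.
  rewrite cat_uniq us enum_uniq andbT /=; apply/hasPn => x.
  by rewrite mem_enum !inE.
apply: (@leq_trans (size (enum 'I_n))); first by rewrite size_enum_ord.
apply: uniq_leq_size; first exact: enum_uniq.
move=> x _; rewrite mem_cat mem_enum !inE; case: (x \in s) => //.
Qed.

Lemma small_case (R : realType) n (p : 'I_n -> R * R) m j (s : seq 'I_n) (x0 : 'I_n) :
  (m = 5 /\ j = 2) \/ (m = 6 /\ j = 1) -> general_position p -> m <= n -> uniq s ->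
  let f := fun i => nth x0 (s ++ enum (~: [set x in s])) i in
  dist_le (disj_adj p) (img f (0, 1)) (img f (0, 2)) j.+2 /\
  dist_le (disj_adj p) (img f (0, 1)) (img f (2, 3)) j.+2.
Proof.
move=> Hmj gp mn us f.
have Hm : (m == 5) || (m == 6) by case: Hmj => -[-> _].
have m4 : 3 < m by case: Hmj => -[-> _].
have [uL sL] := ext_list us.
have finj : forall x y, x < m -> y < m -> f x = f y -> x = y.
  move=> x y xm ym /eqP; rewrite /f nth_uniq //; first by move/eqP.
    by apply: leq_trans sL; apply: leq_trans mn.
  by apply: leq_trans sL; apply: leq_trans mn.
have := comp_ok Hmj (size_map _ _) (sat_real Hm gp finj).
rewrite /leaf; case: ifP => // h1 h2; split.
  by apply: (leaf_real (T := (0, 2)) Hm gp finj) => //=; lia.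
by apply: (leaf_real (T := (2, 3)) Hm gp finj) => //=; lia.
Qed.

Ltac solve_uniq :=
  rewrite /= !inE !negb_or ?andbT; repeat (apply/andP; split); try done;
  by rewrite eq_sym.

Lemma small_pairs (R : realType) n (p : 'I_n -> R * R) :
  5 <= n <= 8 -> general_position p -> forall S T, is_segment S -> is_segment T ->
  dist_le (disj_adj p) S T (if n == 5 then 4 else 3).
Proof.
move=> hn gp S T.
pose m := if n == 5 then 5 else 6; pose j := if n == 5 then 2 else 1.
have Hmj : (m = 5 /\ j = 2) \/ (m = 6 /\ j = 1).
  by rewrite /m /j; case: (n == 5); [left|right].
have mn : m <= n by rewrite /m; case: eqP; lia.
have -> : (if n == 5 then 4 else 3) = j.+2 by rewrite /j; case: (n == 5).
have shared : forall a b c : 'I_n, uniq [:: a; b; c] ->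
    dist_le (disj_adj p) [set a; b] [set a; c] j.+2.
  by move=> a b c u; have [h _] := small_case a Hmj gp mn u; exact: h.
have disj : forall a b c d : 'I_n, uniq [:: a; b; c; d] ->
    dist_le (disj_adj p) [set a; b] [set c; d] j.+2.
  by move=> a b c d u; have [_ h] := small_case a Hmj gp mn u; exact: h.
have refl : forall X, dist_le (disj_adj p) X X j.+2.
  by move=> X; exists 0 => //; apply: walk_nil.
rewrite /is_segment => /eqP/cards2P [a [b [ab ->]]] /eqP/cards2P [c [d [cd ->]]].
case: (eqVneq a c) => [ac|ac].
  subst c; case: (eqVneq b d) => [bd|bd]; first by subst d; exact: refl.
  by apply: shared; solve_uniq.
case: (eqVneq a d) => [ad|ad].
  subst d; rewrite [[set c; a]]setUC.
  case: (eqVneq b c) => [bc|bc]; first by subst c; exact: refl.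
  by apply: shared; solve_uniq.
case: (eqVneq b c) => [bc|bc].
  subst c; rewrite [[set a; b]]setUC.
  by apply: shared; solve_uniq.
case: (eqVneq b d) => [bd|bd].
  subst d; rewrite [[set a; b]]setUC [[set c; b]]setUC.
  by apply: shared; solve_uniq.
by apply: disj; solve_uniq.
Qed.


Lemma big_pairs (R : realType) n (p : 'I_n -> R * R) :
  9 <= n -> general_position p -> forall S T, is_segment S -> is_segment T ->
  dist_le (disj_adj p) S T 2.
Proof.
move=> hn gp S T.
rewrite /is_segment => /eqP/cards2P [a [b [ab ->]]] /eqP/cards2P [c [d [cd ->]]].
pose X := ~: [set a; b; c; d].
have cX : 4 < #|X|.
  have h1 := cardsC [set a; b; c; d]; rewrite card_ord in h1.
  have h2 : #|[set a; b; c; d]| <= 4.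
    apply: (@leq_trans #|[:: a; b; c; d]|); last exact: card_size.
    by apply: subset_leq_card; apply/subsetP => x; rewrite !inE -!orbA.
  rewrite /X; lia.
pose h := fun x => (bitp p a b x, bitp p c d x).
have [[x [y [xX [yX [xy hxy]]]]] | H] :=
  classic (exists x y, x \in X /\ y \in X /\ x != y /\ h x = h y); last first.
  exfalso.
  have inj : {in X &, injective h}.
    move=> x y xX yX hxy; apply/eqP; apply: contraT => nxy; exfalso; apply: H.
    by exists x, y.
  have := card_in_imset inj.
  have : #|[set h x | x in X]| <= 4 by rewrite -[4]/(2 * 2) -card_bool -card_prod; apply: max_card.
  by move=> h3 h4; rewrite h4 in h3; move: cX; rewrite ltnNge h3.
move: xX yX; rewrite !inE !negb_or => /andP[/andP[/andP[xa xb] xc] xd] /andP[/andP[/andP[ya yb] yc] yd].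
case: hxy => e1 e2.
exists 2 => //.
apply: (walk_cons (y := [set x; y])).
  by apply: Adj => //; rewrite /= !inE !negb_or; rewrite xy ab !(eq_sym a) !(eq_sym b) xa xb ya yb.
apply: (walk_cons (y := [set c; d])); last exact: walk_nil.
apply: disj_adj_sym; apply: Adj => //.
by rewrite /= !inE !negb_or; rewrite xy cd !(eq_sym c) !(eq_sym d) xc xd yc yd.
Qed.


Lemma dist_le_mono (T : Type) (A : T -> T -> Prop) u v k k' :
  dist_le A u v k -> k <= k' -> dist_le A u v k'.
Proof. by case=> m mk W kk'; exists m => //; apply: leq_trans kk'. Qed.

Lemma diam_exists (T : Type) (V : T -> Prop) (A : T -> T -> Prop) B :
  (forall u v, V u -> V v -> dist_le A u v B) ->
  (exists u v, V u /\ V v /\ ~ dist_le A u v 1) ->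
  exists d, 2 <= d <= B /\ is_diameter V A d.
Proof.
move=> Hall [u0 [v0 [Vu [Vv Hn]]]].
elim: B Hall => [|B IH] Hall.
  by exfalso; apply: Hn; apply: dist_le_mono (Hall _ _ Vu Vv) _.
have [[u [v [Vu' [Vv' Hn']]]] | H] :=
  classic (exists u v, V u /\ V v /\ ~ dist_le A u v B).
  exists B.+1; split; last by split => //; exists u, v.
  case: (leqP 2 B.+1) => hB; first by rewrite /= ltnSn.
  exfalso; apply: Hn; have B0 : B = 0 by lia.
  by rewrite B0 in Hall; apply: Hall.
have [d [hd Hd]] : exists d, 2 <= d <= B /\ is_diameter V A d.
  apply: IH => u v Vu' Vv'; apply: NNPP => Hn'; apply: H; by exists u, v.
by exists d; split => //; lia.
Qed.

Lemma lower (R : realType) n (p : 'I_n -> R * R) : 2 < n ->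
  exists u v, is_segment u /\ is_segment v /\ ~ dist_le (disj_adj p) u v 1.
Proof.
move=> n3.
have h0 : 0 < n by lia. have h1 : 1 < n by lia.
pose i0 : 'I_n := Ordinal h0; pose i1 : 'I_n := Ordinal h1; pose i2 : 'I_n := Ordinal n3.
have n01 : i0 != i1 by apply/eqP => /(congr1 val).
have n02 : i0 != i2 by apply/eqP => /(congr1 val).
have n12 : i1 != i2 by apply/eqP => /(congr1 val).
exists [set i0; i1], [set i0; i2].
split; first by rewrite /is_segment cards2 n01.
split; first by rewrite /is_segment cards2 n02.
case=> k; case: k => [|[|k]] // _ W.
  inversion W as [x E H|].
  have : i1 \in [set i0; i2] by rewrite -H !inE eqxx orbT.
  by rewrite !inE (negbTE n12) eq_sym (negbTE n01).
inversion W as [|x y z k' Axy W' E1 E2 E3].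
have Ey : y = [set i0; i2] by inversion W'.
rewrite Ey in Axy.
case: Axy => _ [_ H]; apply: H; exists (p i0); split.
  exists i0, i1; split => //; exists 0%R; split; first exact: lexx.
  split; first exact: ler01.
  by split; rewrite subr0 mul1r mul0r addr0.
exists i0, i2; split => //; exists 0%R; split; first exact: lexx.
  split; first exact: ler01.
by split; rewrite subr0 mul1r mul0r addr0.
Qed.


Theorem theorem1 (R : realType) (n : nat) (p : 'I_n -> R * R) :
  (5 <= n)%N -> injective p -> general_position p ->
  exists d : nat,
    is_diameter (@is_segment n) (disj_adj p) d /\
    (n = 5%N -> d \in [:: 2; 3; 4]%N) /\
    ((6 <= n <= 8)%N -> d \in [:: 2; 3]%N) /\
    ((9 <= n)%N -> d = 2%N).
Proof.
move=> n5 pinj gp.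
pose B := if n == 5 then 4 else if n <= 8 then 3 else 2.
have Hall : forall u v, is_segment u -> is_segment v -> dist_le (disj_adj p) u v B.
  move=> u v hu hv; rewrite /B; case: (leqP n 8) => hn.
    have hn' : 5 <= n <= 8 by rewrite n5 hn.
    have := small_pairs hn' gp hu hv; by case: (n == 5).
  have hn' : 9 <= n by [].
  have := big_pairs hn' gp hu hv.
  by have -> : (n == 5) = false by apply/eqP; lia.
have n3 : 2 < n by lia.
have [d [hd Hd]] := diam_exists Hall (lower p n3).
exists d; split => //.
have dB : d <= B by case/andP: hd.
have d2 : 2 <= d by case/andP: hd.
split.
  by move=> n5'; move: dB; rewrite /B n5' /= => dB; rewrite !inE; lia.
split.
  move=> /andP[h6 h8]; have e5 : (n == 5) = false by apply/eqP; lia.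
  by move: dB; rewrite /B e5 h8 => dB; rewrite !inE; lia.
move=> h9; have e5 : (n == 5) = false by apply/eqP; lia.
have e8 : (n <= 8) = false by apply/negbTE; rewrite -ltnNge.
by move: dB; rewrite /B e5 e8 => dB; lia.
Qed.
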